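(* Let $n\in\mathbb{N}$, $g\in\mathbb{R}$, and $\mathcal{C}=\{q\in\mathbb{R}^n \mid q_1>\dots>q_n\}$. For $q\in\mathcal{C}$, $p\in\mathbb{R}^n$ define the $n\times n$ matrices $$Q_{jk}=q_j\delta_{jk},\qquad L_{jk}=p_j\delta_{jk}+\mathrm{i} g\,\frac{1-\delta_{jk}}{q_j-q_k},\qquad j,k=1,\dots,n,$$ let $v=(1,\dots,1)^\dagger\in\mathbb{R}^n$, and for $z\in\mathbb{C}$ define $$A(z)=\det(z\mathbf{1}_n-L),\qquad C(z)=\operatorname{tr}\big(Q\operatorname{adj}(z\mathbf{1}_n-L)\,vv^\dagger\big),\qquad D(z)=\operatorname{tr}\big(Q\operatorname{adj}(z\mathbf{1}_n-L)\big),$$ where $\operatorname{adj}$ denotes the adjugate matrix (transpose of the cofactor matrix). Then for every $(q,p)\in\mathcal{C}\times\mathbb{R}^n$ and every $z\in\mathbb{C}$, $$C(z)=D(z)+\frac{\mathrm{i} g}{2}A''(z),$$ where $A''$ is the second derivative of the polynomial $A$ in $z$.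
   Context: $Q$ and $L$ are the position and Lax matrices of the rational Calogero--Moser system on the phase space $\mathcal{C}\times\mathbb{R}^n$. *)

(* Defs.v *)
From HB Require Import structures.
From mathcomp Require Import all_boot all_order all_algebra.
From mathcomp Require Import complex.
Set Implicit Arguments. Unset Strict Implicit. Unset Printing Implicit Defensive.
Import Order.TTheory GRing.Theory Num.Theory.
Local Open Scope ring_scope.
Local Open Scope complex_scope.

Definition in_config (R : rcfType) (n : nat) (q : 'I_n -> R) : Prop :=
  forall j k : 'I_n, (j < k)%N -> q k < q j.

Definition Qmx (R : rcfType) (n : nat) (q : 'I_n -> R) : 'M[R[i]]_n :=
  \matrix_(j, k) (if j == k then (q j)%:C else 0).

Definition Lmx (R : rcfType) (n : nat) (g : R) (q p : 'I_n -> R) : 'M[R[i]]_n :=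
  \matrix_(j, k) (if j == k then (p j)%:C
                  else 'i%C * g%:C / ((q j)%:C - (q k)%:C)).

Definition vvec (R : rcfType) (n : nat) : 'cV[R[i]]_n := const_mx 1.

Definition Apoly (R : rcfType) (n : nat) (g : R) (q p : 'I_n -> R) : {poly R[i]} :=
  char_poly (Lmx g q p).

Definition Cfun (R : rcfType) (n : nat) (g : R) (q p : 'I_n -> R) (z : R[i]) : R[i] :=
  \tr (Qmx q *m \adj (z%:M - Lmx g q p) *m (vvec R n *m (vvec R n)^T)).

Definition Dfun (R : rcfType) (n : nat) (g : R) (q p : 'I_n -> R) (z : R[i]) : R[i] :=
  \tr (Qmx q *m \adj (z%:M - Lmx g q p)).

(* Main.v *)
Require Import Defs.
From HB Require Import structures.
From mathcomp Require Import all_boot all_order all_algebra.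
From mathcomp Require Import complex.
From mathcomp Require Import ring.
Import Order.TTheory GRing.Theory Num.Theory.
Local Open Scope ring_scope.

Set Implicit Arguments. Unset Strict Implicit. Unset Printing Implicit Defensive.
Section Jac.
Variable K : fieldType.

Lemma deriv_prod m (F : 'I_m -> {poly K}) :
  (\prod_(i < m) F i)^`() = \sum_(i < m) (F i)^`() * \prod_(j < m | j != i) F j.
Proof.
elim: m F => [|m IH] F; first by rewrite !big_ord0 -polyC1 derivC.
rewrite big_ord_recr derivM IH /= big_ord_recr /= big_distrl /=.
congr (_ + _).
  apply: eq_bigr => i _.
  rewrite (big_mkcond (fun j => j != widen_ord (leqnSn m) i)) big_ord_recr /=.
  rewrite -big_mkcond /= -mulrA; congr (_ * (_ * _)).
  have -> : (ord_max != widen_ord (leqnSn m) i) = true.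
    by rewrite -(inj_eq val_inj) /= neq_ltn ltn_ord orbT.
  done.
rewrite mulrC; congr (_ * _).
rewrite (big_mkcond (fun j => j != ord_max)) big_ord_recr /= eqxx mulr1.
apply: eq_bigr => i _.
have -> : (widen_ord (leqnSn m) i != ord_max) = true.
  by rewrite -(inj_eq val_inj) /= neq_ltn ltn_ord.
done.
Qed.

Lemma deriv_sign (b : bool) : ((-1) ^+ b : {poly K})^`() = 0.
Proof. by case: b; rewrite /= ?expr0 ?expr1 -?polyC1 ?derivN derivC ?oppr0. Qed.

Lemma deriv_det n (M : 'M[{poly K}]_n) :
  (\det M)^`() = \tr (map_mx deriv M *m \adj M).
Proof.
rewrite /(\det M) linear_sum /=.
under eq_bigr => s _ do rewrite derivM deriv_sign mul0r add0r deriv_prod big_distrr.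
rewrite exchange_big /= /mxtrace.
apply: eq_bigr => i _.
pose Mi := \matrix_(k, l) if k == i then (M k l)^`() else M k l.
have -> : (map_mx deriv M *m \adj M) i i = \det Mi.
  rewrite (expand_det_row _ i) mxE; apply: eq_bigr => j _.
  rewrite !mxE eqxx; congr (_ * _).
  rewrite /cofactor; congr (_ * \det _); apply/matrixP => a b.
  by rewrite !mxE eq_sym (negbTE (neq_lift i a)).
apply: eq_bigr => s _.
rewrite [in RHS](bigD1 i) //= mxE eqxx; congr (_ * (_ * _)).
by apply: eq_bigr => k /negbTE kni; rewrite mxE kni.
Qed.
End Jac.

Lemma trJJ (S : comNzRingType) m (Y Z : 'M[S]_m) :
  \tr (Y *m const_mx 1 *m Z *m const_mx 1) =
  \tr (Y *m const_mx 1) * \tr (Z *m const_mx 1).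
Proof.
pose u : 'cV[S]_m := const_mx 1.
have hJ : const_mx 1 = u *m u^T.
  by apply/matrixP => i j; rewrite !mxE big_ord1 !mxE mulr1.
rewrite hJ !mulmxA mxtrace_mulC [in X in X * _]mxtrace_mulC.
rewrite [in X in _ * X]mxtrace_mulC !mulmxA !trace_mx11.
have -> : u^T *m Y *m u *m u^T *m Z *m u = (u^T *m Y *m u) *m (u^T *m Z *m u) by rewrite !mulmxA.
by rewrite mxE big_ord1.
Qed.

Section Der.
Variable K : fieldType.
Lemma deriv_mulmx m (Y Z : 'M[{poly K}]_m) :
  map_mx deriv (Y *m Z) = map_mx deriv Y *m Z + Y *m map_mx deriv Z.
Proof.
apply/matrixP => i j; rewrite !mxE linear_sum -big_split /=.
by apply: eq_bigr => k _; rewrite derivM !mxE.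
Qed.

Lemma deriv_scalar m (a : {poly K}) : map_mx deriv (a%:M : 'M_m) = (a^`())%:M.
Proof. by apply/matrixP => i j; rewrite !mxE derivMn. Qed.

Lemma deriv_charmx m (L : 'M[K]_m) : map_mx deriv (char_poly_mx L) = 1%:M.
Proof. by apply/matrixP => i j; rewrite !mxE derivB derivMn derivX derivC subr0. Qed.

Lemma trderiv m (Y : 'M[{poly K}]_m) : \tr (map_mx deriv Y) = (\tr Y)^`().
Proof. by rewrite /mxtrace linear_sum; apply: eq_bigr => i _; rewrite mxE. Qed.

Lemma dA m (L : 'M[K]_m) : (char_poly L)^`() = \tr (\adj (char_poly_mx L)).
Proof. by rewrite /char_poly deriv_det deriv_charmx mul1mx. Qed.

Lemma AA2 m (L : 'M[K]_m) :
  char_poly L * (char_poly L)^`()^`() =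
  (char_poly L)^`() * (char_poly L)^`() -
    \tr (\adj (char_poly_mx L) *m \adj (char_poly_mx L)).
Proof.
set M := char_poly_mx L; set P := \adj M.
have h := congr1 (map_mx deriv) (mul_mx_adj M).
rewrite deriv_mulmx deriv_charmx mul1mx deriv_scalar -/P in h.
have h2 := congr1 (mulmx P) h.
rewrite mulmxDr mulmxA mul_adj_mx mul_scalar_mx mul_mx_scalar in h2.
have h3 := congr1 mxtrace h2.
rewrite mxtraceD !mxtraceZ trderiv -dA -/P in h3.
rewrite /M -/(char_poly L) in h3.
by rewrite -h3; ring.
Qed.
End Der.

Section Key.
Variables (K : fieldType) (n : nat) (d : 'I_n -> K) (L : 'M[K]_n) (c : K).
Hypothesis hd : forall j k, j != k -> d j != d k.
Let Q : 'M[K]_n := diag_mx (\row_j d j).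
Hypothesis hQL : Q *m L - L *m Q = c *: (const_mx 1 - 1%:M).

Local Notation Qp := (map_mx polyC Q).
Local Notation Lp := (map_mx polyC L).
Local Notation M := (char_poly_mx L).
Local Notation P := (\adj (char_poly_mx L)).
Local Notation A := (char_poly L).
Local Notation J := (const_mx 1 : 'M[{poly K}]_n).
Local Notation X := (const_mx 1 - 1%:M : 'M[{poly K}]_n).
Local Notation cp := (c%:P).

Lemma hQLp : Qp *m Lp - Lp *m Qp = cp *: X.
Proof.
by rewrite -!map_mxM -map_mxB hQL map_mxZ map_mxB map_const_mx map_mx1 rmorph1.
Qed.

Lemma MP : M *m P = A%:M. Proof. exact: mul_mx_adj. Qed.
Lemma PM : P *m M = A%:M. Proof. exact: mul_adj_mx. Qed.

Lemma LP : Lp *m P = P *m Lp.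
Proof.
have h : 'X%:M *m P - Lp *m P = 'X%:M *m P - P *m Lp.
  by rewrite -mulmxBl -scalar_mxC -mulmxBr -/(char_poly_mx L) MP PM.
by move/addrI/oppr_inj: h.
Qed.

Lemma trPcomm : \tr (P *m (Qp *m Lp - Lp *m Qp)) = 0.
Proof.
rewrite mulmxBr raddfB /= !mulmxA mxtrace_mulC mulmxA LP -!mulmxA.
by rewrite subrr.
Qed.

Lemma trPX (hc : c != 0) : \tr (P *m X) = 0.
Proof.
have := trPcomm; rewrite hQLp -scalemxAr mxtraceZ => /eqP.
by rewrite mulf_eq0 polyC_eq0 (negbTE hc) /= => /eqP.
Qed.

Lemma F3 : A *: (Qp *m P - P *m Qp) = cp *: (P *m X *m P).
Proof.
have e1 : M *m Qp - Qp *m M = cp *: X.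
  rewrite /char_poly_mx mulmxBl mulmxBr scalar_mxC -hQLp.
  by rewrite opprB addrC addrA subrK.
rewrite [RHS]scalemxAl [in RHS]scalemxAr -e1 mulmxBr mulmxBl !mulmxA PM -!mulmxA MP.
by rewrite mul_scalar_mx mul_mx_scalar -scalemxAr scalerBr.
Qed.

Lemma F4 (hc : c != 0) : \tr (P *m P *m X) = 0.
Proof.
have := congr1 mxtrace F3.
rewrite !mxtraceZ raddfB /= mxtrace_mulC subrr mulr0 => /esym/eqP.
rewrite mulf_eq0 polyC_eq0 (negbTE hc) /= mxtrace_mulC mulmxA => /eqP.
done.
Qed.

Lemma F5 (hc : c != 0) : \tr (P *m Qp *m X) + \tr (P *m X *m Qp) = 0.
Proof.
have e : cp *: (Qp *m X + X *m Qp) = Qp *m Qp *m Lp - Lp *m Qp *m Qp.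
  rewrite scalerDr scalemxAr scalemxAl -hQLp mulmxBr mulmxBl !mulmxA.
  by rewrite addrA subrK.
have : \tr (P *m (Qp *m Qp *m Lp - Lp *m Qp *m Qp)) = 0.
  rewrite mulmxBr raddfB /= !mulmxA mxtrace_mulC !mulmxA LP.
  by rewrite subrr.
rewrite -e -scalemxAr mxtraceZ => /eqP.
rewrite mulf_eq0 polyC_eq0 (negbTE hc) /= => /eqP h.
by rewrite -[RHS]h (mulmxDr P (Qp *m X)) (mxtraceD (P *m (Qp *m X))) !mulmxA.
Qed.

Lemma Qp_diag : Qp = diag_mx (\row_j (d j)%:P).
Proof. by apply/matrixP => i j; rewrite !mxE raddfMn. Qed.

Lemma key : 2%:R * \tr (Qp *m P *m X) = cp * A^`()^`().
Proof.
have hA : A != 0 by apply: monic_neq0; exact: char_poly_monic.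
have [c0|hc] := eqVneq c 0.
  have hcomm : Qp *m P = P *m Qp.
    have := F3; rewrite c0 polyC0 scale0r => /matrixP h.
    apply/matrixP => i j; have := h i j; rewrite !mxE => /eqP.
    by rewrite mulf_eq0 (negbTE hA) /= subr_eq0 => /eqP.
  have hoff : forall i j, i != j -> P i j = 0.
    move=> i j hij; have := hcomm; move/matrixP/(_ i j).
    rewrite Qp_diag mul_diag_mx mul_mx_diag !mxE => /eqP.
    rewrite [_ * (d j)%:P]mulrC -subr_eq0 -mulrBl mulf_eq0 -polyCB polyC_eq0 subr_eq0.
    by rewrite (negbTE (hd hij)) /= => /eqP.
  rewrite c0 polyC0 mul0r; apply/eqP; rewrite mulf_eq0; apply/orP; right; apply/eqP.
  rewrite /mxtrace; apply: big1 => i _; rewrite mxE; apply: big1 => k _.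
  rewrite Qp_diag mul_diag_mx !mxE.
  case: (eqVneq k i) => [->|hki]; first by rewrite /= mulr1n subrr mulr0.
  have hik : i != k by rewrite eq_sym.
  by have := hoff i k hik; rewrite mxE => ->; rewrite mulr0 mul0r.
have e1 : A * (2%:R * \tr (Qp *m P *m X)) = cp * \tr (P *m X *m P *m X).
  have := congr1 (fun B => \tr (B *m X)) F3; rewrite /= -!scalemxAl !mxtraceZ.
  rewrite mulmxBl raddfB /= => <-.
  have e : \tr (P *m X *m Qp) = \tr (Qp *m P *m X) by rewrite mxtrace_mulC mulmxA.
  have := F5 hc; rewrite e => /eqP; rewrite addr_eq0 => /eqP ->.
  by rewrite opprK; ring.
have e2 : \tr (P *m X *m P *m X) = A * A^`()^`().
  rewrite AA2 dA.
  have hPX : P *m X = P *m J - P by rewrite mulmxBr mulmx1.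
  have t1 : \tr (P *m J) = \tr P.
    by apply/eqP; rewrite -subr_eq0 -raddfB /= -hPX trPX.
  have t2 : \tr (P *m P *m J) = \tr (P *m P).
    by have := F4 hc; rewrite mulmxBr mulmx1 raddfB /= => /eqP; rewrite subr_eq0 => /eqP.
  rewrite -[P *m X *m P *m X]mulmxA hPX mulmxBl !mulmxBr !raddfB /=.
  rewrite !mulmxA trJJ t1 [\tr (P *m J *m P)]mxtrace_mulC mulmxA t2.
  by ring.
apply: (mulfI hA); rewrite e1 e2; ring.
Qed.
End Key.


Unset Implicit Arguments. Set Strict Implicit. Set Printing Implicit Defensive.
Local Open Scope complex_scope.

Theorem mainTheorem2 (R : rcfType) (n : nat) (g : R) (q p : 'I_n -> R)
  (hq : in_config q) (z : R[i]) :
  Cfun g q p z = Dfun g q p z + ('i%C * g%:C / 2%:R) * ((Apoly g q p)^`(2)).[z].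
Proof.
set d : 'I_n -> R[i] := fun j => (q j)%:C.
set L := Lmx g q p.
set c : R[i] := 'i%C * g%:C.
have hd : forall j k : 'I_n, j != k -> d j != d k.
  move=> j k; rewrite neq_ltn => /orP [] h; rewrite /d.
    by rewrite gt_eqF //= ltcR; apply: hq.
  by rewrite lt_eqF //= ltcR; apply: hq.
have hQ : Qmx q = diag_mx (\row_j d j).
  by apply/matrixP => i j; rewrite !mxE; case: eqP.
have hQL : diag_mx (\row_j d j) *m L - L *m diag_mx (\row_j d j) =
           c *: (const_mx 1 - 1%:M).
  apply/matrixP => i j; rewrite mul_diag_mx mul_mx_diag !mxE.
  case: (eqVneq i j) => [->|hij].
    by rewrite /= mulr1n subrr mulr0 mulrC subrr.
  rewrite /= mulr0n subr0 mulr1 /c.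
  have hz : d i - d j != 0 by rewrite subr_eq0 hd.
  rewrite /d in hz *; by field.
have K := key hd hQL.
rewrite -hQ in K.
have K2 := congr1 (horner_eval z) K.
have eQ : map_mx (horner_eval z) (map_mx polyC (Qmx q)) = Qmx q.
  by apply/matrixP => i j; rewrite !mxE /= horner_evalE hornerC.
have eM : map_mx (horner_eval z) (char_poly_mx L) = z%:M - L.
  apply/matrixP => i j; rewrite !mxE /=.
  by rewrite horner_evalE hornerD hornerN hornerMn hornerX hornerC.
rewrite rmorphM /= rmorph_nat -trace_map_mx !map_mxM map_mx_adj eQ eM in K2.
rewrite map_mxB map_const_mx map_mx1 rmorph1 rmorphM /= in K2.
rewrite /horner_eval hornerC in K2.
have eJ : vvec R n *m (vvec R n)^T = const_mx 1.
  by apply/matrixP => i j; rewrite !mxE big_ord1 !mxE mulr1.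
have eA : (Apoly g q p)^`(2) = (char_poly L)^`()^`().
  by rewrite derivnS derivn1.
rewrite /Cfun /Dfun eJ eA -/L.
rewrite mulmxBr mulmx1 raddfB /= in K2.
rewrite hornerC in K2.
rewrite mulrAC -K2.
field.
by [].
Qed.
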